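(* Assume the policies $\mathcal S$ and $\emptyset$ are unichain in $\mathcal M$ and that $\mathcal M$ is indexable. Then every Whittle index $\lambda_s$ of $\mathcal M$ satisfies $$-\|r^1-r^0\|_\infty-\tfrac12\,\mathrm{sp}(r^1)D(P^1)\|P^1-P^0\|_\infty\ \le\ \lambda_s\ \le\ \|r^1-r^0\|_\infty+\tfrac12\,\mathrm{sp}(r^0)D(P^0)\|P^1-P^0\|_\infty.$$
   Context: Setting. An MDP is $\mathcal M=(\mathcal S,\{0,1\},(P^a)_a,(r^a)_a)$, finite $\mathcal S$, row-stochastic $P^0,P^1$, rewards $r^0,r^1\in\mathbb R^{\mathcal S}$. A policy is a subset $\pi\subseteq\mathcal S$ of states where action 1 is played, inducing $P^\pi$, $r^\pi$; $\mathcal M$ is unichain if every $P^\pi$ has a single recurrent class. For $\lambda\in\mathbb R$, $\mathcal M(\lambda)$ has the same transitions and rewards $r^1-\lambda\mathbf 1$ (action 1), $r^0$ (action 0). For a unichain policy, bias $b^\pi(\lambda)$ solves $g^\pi\mathbf 1+b^\pi=r^\pi+P^\pi b^\pi$; activation advantage $\alpha^\pi_s(\lambda)=r^1_s-\lambda-r^0_s+(P^1_{s,\cdot}-P^0_{s,\cdot})\cdot b^\pi(\lambda)$. A policy is BO (bias optimal) in $\mathcal M(\lambda)$ if gain optimal and bias-maximal among gain-optimal policies; for unichain MDPs $\pi$ is BO iff $\alpha^\pi_s(\lambda)\ge0$ for $s\in\pi$ and $\le0$ for $s\notin\pi$. The optimal activation advantage $\alpha^*_s(\lambda)$ is $\alpha^\pi_s(\lambda)$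 for any BO policy $\pi$ of $\mathcal M(\lambda)$. $\mathcal M$ is indexable if for every $s$ there is $\lambda_s$ (Whittle index) with $\alpha^*_s(\lambda)>0$ for $\lambda<\lambda_s$ and $\alpha^*_s(\lambda)<0$ for $\lambda>\lambda_s$. $\mathrm{sp}(v)=\max v-\min v$; $\|v\|_\infty=\max_s|v_s|$; $\|A\|_\infty=\max_s\sum_{s'}|A_{s,s'}|$. Diameter of a unichain $P$ with recurrent class $\mathcal S_r$: $D(P)=\max_{s\in\mathcal S,s'\in\mathcal S_r}\mathbb E^P[\tau_{s,s'}]$ (expected hitting time). *)

(* Defs.v *)
From HB Require Import structures.
From mathcomp Require Import all_boot all_order all_algebra.
From mathcomp Require Import reals topology normedtype sequences.
Set Implicit Arguments. Unset Strict Implicit. Unset Printing Implicit Defensive.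
Import Order.TTheory GRing.Theory Num.Theory numFieldNormedType.Exports.
Local Open Scope ring_scope.

(* State space: 'I_n.+1 (a nonempty finite set). Vectors: 'I_n.+1 -> R.
   Transition matrices: 'M[R]_n.+1.  Policies: finite sets {set 'I_n.+1}
   of states where action 1 is played. *)

Section Defs.
Variables (R : realType) (n : nat).
Notation S := 'I_n.+1.
Notation vec := (S -> R).
Notation mx := 'M[R]_n.+1.

Definition stochastic (P : mx) : Prop :=
  (forall i j, 0 <= P i j) /\ (forall i, \sum_j P i j = 1).

Definition mxv (P : mx) (v : vec) : vec := fun i => \sum_j P i j * v j.

Definition edge (P : mx) : rel S := fun i j => 0 < P i j.
Definition accessible (P : mx) (i j : S) : bool := connect (edge P) i j.
Definition recurrent (P : mx) (i : S) : bool :=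
  [forall j, accessible P i j ==> accessible P j i].
(* exactly one recurrent class: recurrent states exist and all communicate *)
Definition unichain (P : mx) : Prop :=
  (exists i, recurrent P i) /\
  (forall i j, recurrent P i -> recurrent P j -> accessible P i j).

Definition pol_mx (P0 P1 : mx) (pi : {set S}) : mx :=
  \matrix_(i, j) (if i \in pi then P1 i j else P0 i j).
Definition pol_rew (r0 r1 : vec) (lam : R) (pi : {set S}) : vec :=
  fun i => if i \in pi then r1 i - lam else r0 i.

Definition gain (P : mx) (r : vec) : vec := fun i =>
  limn (fun N : nat => N.+1%:R^-1 * \sum_(t < N.+1) mxv (P ^+ t) r i).
(* bias h = C-lim_N sum_{t<N} (P^t - P^* ) r  (Puterman, Sec. 8.2) *)
Definition bias (P : mx) (r : vec) : vec := fun i =>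
  limn (fun N : nat => N.+1%:R^-1 *
    \sum_(m < N.+1) \sum_(t < m.+1) (mxv (P ^+ t) r i - gain P r i)).

Section MDP.
Variables (P0 P1 : mx) (r0 r1 : vec).

Definition pgain (lam : R) (pi : {set S}) : vec :=
  gain (pol_mx P0 P1 pi) (pol_rew r0 r1 lam pi).
Definition pbias (lam : R) (pi : {set S}) : vec :=
  bias (pol_mx P0 P1 pi) (pol_rew r0 r1 lam pi).

Definition gain_optimal (lam : R) (pi : {set S}) : Prop :=
  forall pi' s, pgain lam pi' s <= pgain lam pi s.
Definition bias_optimal (lam : R) (pi : {set S}) : Prop :=
  gain_optimal lam pi /\
  forall pi', gain_optimal lam pi' -> forall s, pbias lam pi' s <= pbias lam pi s.

Definition act_adv (lam : R) (pi : {set S}) (s : S) : R :=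
  r1 s - lam - r0 s + \sum_j (P1 s j - P0 s j) * pbias lam pi j.

(* lam_s is a Whittle index of s: the optimal activation advantage
   alpha^*_s(lam) (= alpha^pi_s(lam) for any BO policy pi of M(lam)) is > 0
   for lam < lam_s and < 0 for lam > lam_s. *)
Definition whittle_index (s : S) (lam_s : R) : Prop :=
  (forall lam, lam < lam_s -> forall pi, bias_optimal lam pi -> 0 < act_adv lam pi s) /\
  (forall lam, lam_s < lam -> forall pi, bias_optimal lam pi -> act_adv lam pi s < 0).

Definition indexable : Prop := forall s, exists lam_s, whittle_index s lam_s.

End MDP.

Definition sp (v : vec) : R :=
  \big[Num.max/v ord0]_s v s - \big[Num.min/v ord0]_s v s.
Definition normv (v : vec) : R := \big[Num.max/0]_s `|v s|.
Definition normm (A : mx) : R := \big[Num.max/0]_i \sum_j `|A i j|.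

(* tau_{s,s'} = min {t >= 0 : X_t = s'} for the chain P started at X_0 = s.
   Taboo matrix: transitions avoiding s'. *)
Definition taboo (P : mx) (s' : S) : mx :=
  \matrix_(i, j) (if j == s' then 0 else P i j).
(* Pr_s(tau_{s,s'} = t) *)
Definition hit_prob (P : mx) (s s' : S) (t : nat) : R :=
  match t with
  | 0 => (s == s')%:R
  | t'.+1 => (s != s')%:R * ((taboo P s' ^+ t') *m P) s s'
  end.
Definition exp_hit (P : mx) (s s' : S) : R :=
  limn (fun N : nat => \sum_(t < N) (t%:R * hit_prob P s s' t)).
Definition diam (P : mx) : R :=
  \big[Num.max/0]_s \big[Num.max/0]_(s' | recurrent P s') exp_hit P s s'.

End Defs.

(* Main.v *)
Require Import Defs.
From HB Require Import structures.
From mathcomp Require Import all_boot all_order all_algebra.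
From mathcomp Require Import reals topology normedtype sequences.
From mathcomp Require Import boolp.
From mathcomp Require Import ring lra.
Import Order.TTheory GRing.Theory Num.Theory numFieldNormedType.Exports.
Local Open Scope ring_scope.
Set Implicit Arguments. Unset Strict Implicit. Unset Printing Implicit Defensive.

Section Basic.
Variables (R : realType) (n : nat).
Notation S := 'I_n.+1.
Notation vec := (S -> R).
Notation mx := 'M[R]_n.+1.
Implicit Types (P A B : mx) (u v w : vec).

Lemma mxv_ext P u v i : (forall j, u j = v j) -> mxv P u i = mxv P v i.
Proof. by move=> h; apply: eq_bigr => j _; rewrite h. Qed.

Lemma mxvD P u v i : mxv P (fun j => u j + v j) i = mxv P u i + mxv P v i.
Proof. by rewrite /mxv -big_split; apply: eq_bigr => j _; rewrite mulrDr. Qed.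

Lemma mxvB P u v i : mxv P (fun j => u j - v j) i = mxv P u i - mxv P v i.
Proof. by rewrite /mxv -sumrB; apply: eq_bigr => j _; rewrite mulrBr. Qed.

Lemma mxvZ P c u i : mxv P (fun j => c * u j) i = c * mxv P u i.
Proof. by rewrite /mxv mulr_sumr; apply: eq_bigr => j _; rewrite mulrCA. Qed.

Lemma mxv_sum P (I : finType) (F : I -> vec) i :
  mxv P (fun j => \sum_(k : I) F k j) i = \sum_(k : I) mxv P (F k) i.
Proof.
rewrite /mxv exchange_big /=; apply: eq_bigr => j _; by rewrite mulr_sumr.
Qed.

Lemma mxvM A B v i : mxv (A * B) v i = mxv A (mxv B v) i.
Proof.
rewrite /mxv; under eq_bigr do rewrite -mulmxE mxE mulr_suml.
rewrite exchange_big /=; apply: eq_bigr => k _; rewrite mulr_sumr.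
by apply: eq_bigr => j _; rewrite mulrA.
Qed.

Lemma mxv1 v i : mxv 1 v i = v i.
Proof.
rewrite /mxv (bigD1 i) //= big1 ?addr0; first by rewrite mxE eqxx mul1r.
by move=> j /negPf ji; rewrite mxE eq_sym ji mul0r.
Qed.

Lemma mxvXS P t v i : mxv (P ^+ t.+1) v i = mxv P (mxv (P ^+ t) v) i.
Proof. by rewrite exprS mxvM. Qed.

Lemma mxvXSr P t v i : mxv (P ^+ t.+1) v i = mxv (P ^+ t) (mxv P v) i.
Proof. by rewrite exprSr mxvM. Qed.

Lemma stoch_mul A B : stochastic A -> stochastic B -> stochastic (A * B).
Proof.
move=> [A0 A1] [B0 B1]; split.
  by move=> i j; rewrite -mulmxE mxE sumr_ge0 // => k _; rewrite mulr_ge0.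
move=> i; under eq_bigr do rewrite -mulmxE mxE.
rewrite exchange_big /= -[RHS](A1 i); apply: eq_bigr => k _.
by rewrite -mulr_sumr B1 mulr1.
Qed.

Lemma stoch1 : stochastic (1 : mx).
Proof.
split; first by move=> i j; rewrite mxE ler0n.
move=> i; rewrite (bigD1 i) //= big1 ?addr0; first by rewrite mxE eqxx.
by move=> j /negPf ji; rewrite mxE eq_sym ji.
Qed.

Lemma stochX P t : stochastic P -> stochastic (P ^+ t).
Proof.
move=> sP; elim: t => [|t IH]; first exact: stoch1.
by rewrite exprS; apply: stoch_mul.
Qed.

Lemma mxv_cst P c i : stochastic P -> mxv P (fun _ => c) i = c.
Proof. by move=> [_ P1]; rewrite /mxv -mulr_suml P1 mul1r. Qed.

Lemma mxv_mono P u v i : stochastic P -> (forall j, u j <= v j) ->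
  mxv P u i <= mxv P v i.
Proof.
move=> [P0 _] uv; rewrite /mxv; apply: ler_sum => j _.
by rewrite ler_wpM2l.
Qed.

Lemma mxv_bound P v M i : stochastic P -> (forall j, `|v j| <= M) ->
  `|mxv P v i| <= M.
Proof.
move=> sP vM; rewrite ler_norml; apply/andP; split.
  have := @mxv_mono P (fun _ => - M) v i sP.
  rewrite mxv_cst //; apply => j.
  by rewrite lerNl; apply: le_trans (vM j); rewrite -normrN ler_norm.
have := @mxv_mono P v (fun _ => M) i sP.
rewrite mxv_cst //; apply => j.
by apply: le_trans (vM j); apply: ler_norm.
Qed.

End Basic.

Section Decomp.
Variables (R : realType) (n : nat).
Notation S := 'I_n.+1.
Notation vec := (S -> R).
Notation mx := 'M[R]_n.+1.
Implicit Types (P A B : mx) (u v w : vec).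

Definition rv v : 'rV[R]_n.+1 := \row_j v j.
Definition QQ P : mx := (1%:M - P)^T.

Lemma rvQ P v i : (rv v *m QQ P) 0 i = v i - mxv P v i.
Proof.
rewrite /QQ linearB /= trmx1 mulmxBr mulmx1 !mxE.
by congr (_ - _); apply: eq_bigr => j _; rewrite !mxE mulrC.
Qed.

Lemma mxvX_harm P u z t i : stochastic P -> (forall j, mxv P u j = u j) ->
  (forall j, u j = z j - mxv P z j) ->
  mxv (P ^+ t) z i = z i - t%:R * u i.
Proof.
move=> sP Pu uz; elim: t i => [|t IH] i; first by rewrite expr0 mxv1 mul0r subr0.
rewrite mxvXS (mxv_ext _ _ IH) mxvB mxvZ Pu uz.
by rewrite mulrSr; ring.
Qed.

Lemma cap0 P (u : 'rV[R]_n.+1) : stochastic P ->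
  (u <= kermx (QQ P))%MS -> (u <= QQ P)%MS -> u = 0.
Proof.
move=> sP /sub_kermxP uQ /submxP [z uz].
pose uv j := u 0 j; pose zv j := z 0 j.
have Pu j : mxv P uv j = uv j.
  have := rvQ P uv j; have -> : rv uv = u by apply/rowP => k; rewrite mxE.
  by rewrite uQ mxE => /eqP; rewrite eq_sym subr_eq0 => /eqP.
have uzv j : uv j = zv j - mxv P zv j.
  have := rvQ P zv j; have -> : rv zv = z by apply/rowP => k; rewrite mxE.
  by rewrite -uz.
apply/rowP => i; rewrite mxE; apply/eqP/negPn/negP => ui0.
pose M := \sum_j `|zv j|.
have zM j : `|zv j| <= M.
  by rewrite /M (bigD1 j) //= lerDl sumr_ge0.
have hb t : t%:R * `|uv i| <= M + M.
  have := mxvX_harm t i sP Pu uzv.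
  move=> /(congr1 (fun x => zv i - x)); rewrite opprB addrCA subrr addr0.
  move=> h; rewrite -normr_nat -normrM -h.
  apply: le_trans (ler_normB _ _) _; apply: lerD => //.
  exact: mxv_bound (stochX _ sP) zM.
have upos : 0 < `|uv i| by rewrite normr_gt0.
have := hb (Num.bound ((M + M) / `|uv i|)).
rewrite -ler_pdivlMr // leNgt => /negP; apply.
apply: archi_boundP; apply: divr_ge0 => //.
by apply: addr_ge0; rewrite /M sumr_ge0.
Qed.

Lemma decomp P v : stochastic P -> exists k w,
  (forall i, mxv P k i = k i) /\ (forall i, v i = k i + (w i - mxv P w i)).
Proof.
move=> sP; set Q := QQ P.
have capQ : (kermx Q :&: Q)%MS = 0.
  apply/row_matrixP => i; rewrite row0; apply: (cap0 sP).
    exact: submx_trans (row_sub _ _) (capmxSl _ _).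
  exact: submx_trans (row_sub _ _) (capmxSr _ _).
have full : row_full (kermx Q + Q)%MS.
  rewrite /row_full; apply/eqP.
  have := mxrank_sum_cap (kermx Q) Q; rewrite capQ mxrank0 addn0 mxrank_ker.
  by move=> ->; rewrite subnK // rank_leq_row.
have /sub_addsmxP [[a b] /= vab] := submx_full (rv v) full.
pose k : vec := fun j => (a *m kermx Q) 0 j; pose w : vec := fun j => b 0 j.
exists k, w; split.
  move=> i; have := rvQ P k i.
  have -> : rv k = a *m kermx Q by apply/rowP => j; rewrite mxE.
  rewrite -mulmxA mulmx_ker mulmx0 mxE => /eqP; rewrite eq_sym subr_eq0.
  by move/eqP.
move=> i; have := congr1 (fun M : 'rV[R]_n.+1 => M 0 i) vab; rewrite /= mxE => ->.
rewrite mxE; congr (_ + _); rewrite -(rvQ P w).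
by congr ((_ *m _) _ _); apply/rowP => j; rewrite mxE.
Qed.

End Decomp.

Section Gain.
Local Open Scope classical_set_scope.
Variables (R : realType) (n : nat).
Notation S := 'I_n.+1.
Notation vec := (S -> R).
Notation mx := 'M[R]_n.+1.
Implicit Types (P A B : mx) (u v w k : vec).

Lemma harm0 (x : nat -> R) C : (forall N, `|x N| <= C) ->
  (fun N => harmonic N * x N) @ \oo --> (0 : R).
Proof.
move=> xC.
apply: (@squeeze_cvgr _ _ _ _ (fun N => - (C * harmonic N)) (fun N => C * harmonic N)).
- near=> N; have hp : 0 <= harmonic N :> R by apply: harmonic_ge0.
  have : `|harmonic N * x N| <= C * harmonic N.
    by rewrite normrM ger0_norm // mulrC ler_wpM2r.
  by rewrite ler_norml.
- have := cvgN (cvgMl_tmp (a := C) (@cvg_harmonic R)); rewrite mulr0 oppr0; exact.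
- have := cvgMl_tmp (a := C) (@cvg_harmonic R); rewrite mulr0; exact.
Unshelve. all: end_near.
Qed.

Lemma mxvX_fix P k t i : (forall j, mxv P k j = k j) -> mxv (P ^+ t) k i = k i.
Proof.
move=> Pk; elim: t i => [|t IH] i; first by rewrite expr0 mxv1.
by rewrite mxvXS (mxv_ext _ _ IH) Pk.
Qed.

Lemma tele P w N i :
  \sum_(t < N) mxv (P ^+ t) (fun j => w j - mxv P w j) i = w i - mxv (P ^+ N) w i.
Proof.
elim: N => [|N IH]; first by rewrite big_ord0 expr0 mxv1 subrr.
rewrite big_ord_recr /= IH mxvB -mxvXSr.
by rewrite addrA subrK.
Qed.

Lemma gain_cvg P v k w i : stochastic P -> (forall j, mxv P k j = k j) ->
  (forall j, v j = k j + (w j - mxv P w j)) ->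
  (fun N => N.+1%:R^-1 * \sum_(t < N.+1) mxv (P ^+ t) v i) @ \oo --> k i.
Proof.
move=> sP Pk vkw.
have E N : N.+1%:R^-1 * \sum_(t < N.+1) mxv (P ^+ t) v i =
    k i + harmonic N * (w i - mxv (P ^+ N.+1) w i).
  rewrite (eq_bigr (fun t : 'I_N.+1 =>
      k i + mxv (P ^+ t) (fun j => w j - mxv P w j) i)); last first.
    move=> t _; rewrite (mxv_ext _ _ vkw) mxvD mxvX_fix //.
  rewrite big_split /= tele sumr_const card_ord mulrDr /=.
  by rewrite -[k i *+ _]mulr_natl mulrA mulVf ?mul1r // pnatr_eq0.
under eq_cvg do rewrite E.
have := cvgD (@cvg_cst _ (k i) _ \oo _) (@harm0 (fun N => w i - mxv (P ^+ N.+1) w i) (\sum_j `|w j| + \sum_j `|w j|) _).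
rewrite addr0; apply.
move=> N; apply: le_trans (ler_normB _ _) _; apply: lerD.
  by rewrite (bigD1 i) //= lerDl sumr_ge0.
apply: mxv_bound; first exact: stochX.
by move=> j; rewrite (bigD1 j) //= lerDl sumr_ge0.
Qed.

Lemma gain_eq P v k w i : stochastic P -> (forall j, mxv P k j = k j) ->
  (forall j, v j = k j + (w j - mxv P w j)) -> gain P v i = k i.
Proof. by move=> sP Pk vkw; apply: cvg_lim => //; apply: gain_cvg sP Pk vkw. Qed.

Lemma gain_is_cvg P v i : stochastic P ->
  cvgn (fun N => N.+1%:R^-1 * \sum_(t < N.+1) mxv (P ^+ t) v i).
Proof.
move=> sP; have [k [w [Pk vkw]]] := decomp v sP.
by apply/cvg_ex; exists (k i); apply: gain_cvg sP Pk vkw.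
Qed.

Lemma bias_eq P v k w i : stochastic P -> (forall j, mxv P k j = k j) ->
  (forall j, v j = k j + (w j - mxv P w j)) -> bias P v i = w i - gain P w i.
Proof.
move=> sP Pk vkw; have [k' [w' [Pk' wkw]]] := decomp w sP.
rewrite (@gain_eq P w k' w' i sP Pk' wkw).
have gv : gain P v i = k i by apply: gain_eq sP Pk vkw.
apply: cvg_lim => //.
have E N : N.+1%:R^-1 *
    \sum_(m < N.+1) \sum_(t < m.+1) (mxv (P ^+ t) v i - gain P v i) =
    w i - N.+1%:R^-1 * \sum_(t < N.+1) mxv (P ^+ t) w i
      - harmonic N * (mxv (P ^+ N.+1) w i - w i).
  have inner m : \sum_(t < m.+1) (mxv (P ^+ t) v i - gain P v i) =
      w i - mxv (P ^+ m.+1) w i.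
    rewrite -tele; apply: eq_bigr => t _.
    by rewrite (mxv_ext _ _ vkw) mxvD mxvX_fix // gv addrC addKr.
  rewrite (eq_bigr _ (fun (m : 'I_N.+1) _ => inner m)) sumrB sumr_const card_ord.
  have -> : \sum_(m < N.+1) mxv (P ^+ m.+1) w i =
      \sum_(m < N.+1) mxv (P ^+ m) w i + (mxv (P ^+ N.+1) w i - w i).
    rewrite big_ord_recr /= [in RHS]big_ord_recl /= expr0 mxv1.
    have -> : \sum_(i0 < N) mxv (P ^+ bump 0 i0) w i =
      \sum_(i0 < N) mxv (P ^+ i0.+1) w i by apply: eq_bigr.
    ring.
  rewrite /harmonic /= -[w i *+ _]mulr_natl.
  by field; rewrite addrC natr1 pnatr_eq0.
under eq_cvg do rewrite E.
have := cvgB (cvgB (@cvg_cst _ (w i) _ \oo _) (@gain_cvg P w k' w' i sP Pk' wkw))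
  (@harm0 (fun N => mxv (P ^+ N.+1) w i - w i) (\sum_j `|w j| + \sum_j `|w j|) _).
rewrite subr0; apply.
move=> N; apply: le_trans (ler_normB _ _) _; apply: lerD.
  apply: mxv_bound; first exact: stochX.
  by move=> j; rewrite (bigD1 j) //= lerDl sumr_ge0.
by rewrite (bigD1 i) //= lerDl sumr_ge0.
Qed.

End Gain.

Section GainProps.
Local Open Scope classical_set_scope.
Variables (R : realType) (n : nat).
Notation S := 'I_n.+1.
Notation vec := (S -> R).
Notation mx := 'M[R]_n.+1.
Implicit Types (P A B : mx) (u v w k d : vec).

Lemma mxv0 P i : mxv P (fun _ => 0) i = 0.
Proof. by rewrite /mxv big1 // => j _; rewrite mulr0. Qed.

Lemma gainD P u v i : stochastic P ->
  gain P (fun j => u j + v j) i = gain P u i + gain P v i.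
Proof.
move=> sP; have [k1 [w1 [P1 e1]]] := decomp u sP.
have [k2 [w2 [P2 e2]]] := decomp v sP.
rewrite (gain_eq i sP P1 e1) (gain_eq i sP P2 e2).
apply: (@gain_eq _ _ _ _ (fun j => k1 j + k2 j) (fun j => w1 j + w2 j)) => //.
  by move=> j; rewrite mxvD P1 P2.
by move=> j; rewrite e1 e2 mxvD; ring.
Qed.

Lemma gainZ P c u i : stochastic P ->
  gain P (fun j => c * u j) i = c * gain P u i.
Proof.
move=> sP; have [k1 [w1 [P1 e1]]] := decomp u sP.
rewrite (gain_eq i sP P1 e1).
apply: (@gain_eq _ _ _ _ (fun j => c * k1 j) (fun j => c * w1 j)) => //.
  by move=> j; rewrite mxvZ P1.
by move=> j; rewrite e1 mxvZ; ring.
Qed.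

Lemma gain_ext P u v i : (forall j, u j = v j) -> gain P u i = gain P v i.
Proof. by move=> uv; have -> : u = v by apply: funext. Qed.

Lemma gainB P u v i : stochastic P ->
  gain P (fun j => u j - v j) i = gain P u i - gain P v i.
Proof.
move=> sP; rewrite (@gain_ext P _ (fun j => u j + (-1) * v j)).
  by rewrite gainD // gainZ // mulN1r.
by move=> j; rewrite mulN1r.
Qed.

Lemma gain_fix P k i : stochastic P -> (forall j, mxv P k j = k j) ->
  gain P k i = k i.
Proof.
move=> sP Pk; apply: (@gain_eq _ _ _ _ k (fun _ => 0)) => // j.
by rewrite mxv0 subrr addr0.
Qed.

Lemma gain_cst P c i : stochastic P -> gain P (fun _ => c) i = c.
Proof. by move=> sP; apply: gain_fix => // j; apply: mxv_cst. Qed.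

Lemma gain_PI P w i : stochastic P ->
  gain P (fun j => w j - mxv P w j) i = 0.
Proof.
move=> sP; apply: (@gain_eq _ _ _ _ (fun _ => 0) w) => // j.
  exact: mxv0.
by rewrite add0r.
Qed.

Lemma gain_P P v i : stochastic P -> gain P (mxv P v) i = gain P v i.
Proof.
move=> sP; have := gain_PI v i sP; rewrite gainB // => /eqP.
by rewrite subr_eq0 => /eqP ->.
Qed.

Lemma gain_fixed P v i : stochastic P -> mxv P (gain P v) i = gain P v i.
Proof.
move=> sP; have [k1 [w1 [P1 e1]]] := decomp v sP.
rewrite (mxv_ext _ _ (fun j => gain_eq j sP P1 e1)) (gain_eq i sP P1 e1).
exact: P1.
Qed.

Lemma gain_idem P v i : stochastic P -> gain P (gain P v) i = gain P v i.
Proof. by move=> sP; apply: gain_fix => // j; apply: gain_fixed. Qed.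

Lemma gain_mono P u v i : stochastic P -> (forall j, u j <= v j) ->
  gain P u i <= gain P v i.
Proof.
move=> sP uv; apply: ler_lim; try exact: gain_is_cvg.
near=> N; apply: ler_wpM2l; first by rewrite invr_ge0 ler0n.
apply: ler_sum => t _; apply: mxv_mono => //; exact: stochX.
Unshelve. all: end_near.
Qed.

Lemma gain_le P d i : stochastic P -> (forall t, mxv (P ^+ t) d i <= d i) ->
  gain P d i <= d i.
Proof.
move=> sP hd; apply: limr_le; first exact: gain_is_cvg.
near=> N; rewrite ler_pdivrMl ?ltr0n //.
rewrite (_ : N.+1%:R * d i = \sum_(t < N.+1) d i); last first.
  by rewrite sumr_const card_ord mulr_natl.
by apply: ler_sum => t _; apply: hd.
Unshelve. all: end_near.
Qed.

Lemma bias_equation P v i : stochastic P ->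
  gain P v i + bias P v i = v i + mxv P (bias P v) i.
Proof.
move=> sP; have [k1 [w1 [P1 e1]]] := decomp v sP.
have bE j := bias_eq j sP P1 e1.
rewrite (mxv_ext _ _ bE) mxvB gain_fixed // bE (gain_eq i sP P1 e1) e1.
ring.
Qed.

Lemma gain_bias P v i : stochastic P -> gain P (bias P v) i = 0.
Proof.
move=> sP; have [k1 [w1 [P1 e1]]] := decomp v sP.
rewrite (gain_ext _ _ (fun j => bias_eq j sP P1 e1)) gainB // gain_idem //.
by rewrite subrr.
Qed.

End GainProps.

Section Unichain.
Local Open Scope classical_set_scope.
Variables (R : realType) (n : nat).
Notation S := 'I_n.+1.
Notation vec := (S -> R).
Notation mx := 'M[R]_n.+1.
Implicit Types (P A B : mx) (u v w k d : vec).

Lemma exists_rec P i : exists x, accessible P i x && recurrent P x.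
Proof.
pose c j := #|[set l | accessible P j l]|.
case: (@arg_minnP _ i (accessible P i) c (connect0 _ _)) => j ij jmin.
exists j; rewrite ij /=; apply/forallP => l; apply/implyP => jl.
have il : accessible P i l by apply: connect_trans ij jl.
have sub : [set m | accessible P l m] \subset [set m | accessible P j m].
  by apply/subsetP => m; rewrite !inE => lm; apply: connect_trans jl lm.
have : [set m | accessible P l m] = [set m | accessible P j m].
  by apply/eqP; rewrite eqEcard sub /=; apply: jmin.
move/setP => /(_ j); rewrite !inE => ->; exact: connect0.
Qed.

Lemma max_step P k i j : stochastic P -> (forall l, mxv P k l = k l) ->
  (forall l, k l <= k i) -> 0 < P i j -> k j = k i.
Proof.
move=> [P0 P1] Pk kmax Pij.
have H : \sum_l P i l * (k i - k l) = 0.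
  under eq_bigr do rewrite mulrBr.
  by rewrite sumrB -mulr_suml P1 mul1r -/(mxv P k i) Pk subrr.
have ge0 : forall l, xpredT l -> 0 <= P i l * (k i - k l).
  by move=> l _; rewrite mulr_ge0 // subr_ge0.
have := psumr_eq0P ge0 H (i := j) isT; move=> /eqP.
by rewrite mulf_eq0 (gt_eqF Pij) subr_eq0 => /eqP.
Qed.

Lemma max_acc P k i j : stochastic P -> (forall l, mxv P k l = k l) ->
  (forall l, k l <= k i) -> accessible P i j -> k j = k i.
Proof.
move=> sP Pk kmax /connectP [p pth ->] {j}.
elim: p i kmax pth => [|y p IH] i kmax //= /andP [iy pth].
have kyi : k y = k i by apply: max_step sP Pk kmax iy.
rewrite (IH y) // => l; rewrite kyi; exact: kmax.
Qed.

Lemma fix_const P k i j : stochastic P -> unichain P ->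
  (forall l, mxv P k l = k l) -> k i = k j.
Proof.
move=> sP [_ uni] Pk.
have [i0 _ m0] := @arg_maxP _ _ S ord0 xpredT k isT.
have [i1 _ m1] := @arg_maxP _ _ S ord0 xpredT (fun l => - k l) isT.
have [x /andP [ax rx]] := exists_rec P i0.
have [y /andP [by_ ry]] := exists_rec P i1.
have kx : k x = k i0 by apply: max_acc sP Pk _ ax => l; apply: m0.
have Pk' l : mxv P (fun l => - k l) l = - k l.
  by rewrite -(mxv_ext _ _ (fun j => mulN1r (k j))) mxvZ mulN1r Pk.
have ky : - k y = - k i1 by apply: max_acc sP Pk' _ by_ => l; apply: m1.
have kxy : k y = k x.
  apply: max_acc sP Pk _ (uni _ _ rx ry) => l; rewrite kx; exact: m0.
have lo l : k i1 <= k l by rewrite -lerN2; apply: m1.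
have hi l : k l <= k i0 by apply: m0.
have eab : k i0 = k i1 by move/oppr_inj: ky; rewrite kxy kx.
apply/eqP; rewrite eq_le; apply/andP; split.
  by apply: le_trans (hi i) _; rewrite eab.
by apply: le_trans (hi j) _; rewrite eab.
Qed.

End Unichain.

Section Policy.
Local Open Scope classical_set_scope.
Variables (R : realType) (n : nat).
Notation S := 'I_n.+1.
Notation vec := (S -> R).
Notation mx := 'M[R]_n.+1.

Lemma mxv_pol (P0 P1 : mx) (pi : {set S}) v i :
  mxv (pol_mx P0 P1 pi) v i = if i \in pi then mxv P1 v i else mxv P0 v i.
Proof. by rewrite /mxv; case: ifP => h; apply: eq_bigr => j _; rewrite mxE h. Qed.

Lemma pol_stoch (P0 P1 : mx) (pi : {set S}) :
  stochastic P0 -> stochastic P1 -> stochastic (pol_mx P0 P1 pi).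
Proof.
move=> [A0 A1] [B0 B1]; split.
  by move=> i j; rewrite mxE; case: ifP.
move=> i; rewrite (eq_bigr (fun j => if i \in pi then P1 i j else P0 i j)); last by move=> j _; rewrite mxE.
by case: (i \in pi).
Qed.

Variables (P0 P1 : mx) (r0 r1 : vec) (lam : R) (pi0 : {set S}).
Hypotheses (sP0 : stochastic P0) (sP1 : stochastic P1).
Hypothesis uni : unichain (pol_mx P0 P1 pi0).
Let P := pol_mx P0 P1 pi0.
Let r := pol_rew r0 r1 lam pi0.
Let g := pgain P0 P1 r0 r1 lam pi0.
Let b := pbias P0 P1 r0 r1 lam pi0.
Let al := act_adv P0 P1 r0 r1 lam pi0.
Hypothesis hal : forall s, if s \in pi0 then 0 < al s else al s < 0.

Let sP : stochastic P. Proof. exact: pol_stoch. Qed.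

Let beq i : g i + b i = r i + mxv P b i.
Proof. exact: bias_equation. Qed.

Let gconst i j : g i = g j.
Proof. by apply: (fix_const _ _ sP uni) => l; apply: gain_fixed. Qed.

Let alE s : al s = r1 s - lam - r0 s + (mxv P1 b s - mxv P0 b s).
Proof.
rewrite /al /act_adv -/b; congr (_ + _).
by rewrite /mxv -sumrB; apply: eq_bigr => j _; rewrite mulrBl.
Qed.

Section Other.
Local Open Scope classical_set_scope.
Variable pi : {set S}.
Let P' := pol_mx P0 P1 pi.
Let r' := pol_rew r0 r1 lam pi.
Let sP' : stochastic P'. Proof. exact: pol_stoch. Qed.
Let delta i := r' i + mxv P' b i - b i - g i.

Let deltaE i : delta i =
  if (i \in pi) == (i \in pi0) then 0 else if i \in pi then al i else - al i.
Proof.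
have := beq i; rewrite /delta /r' /r /pol_rew /P' /P !mxv_pol alE.
by case: (i \in pi); case: (i \in pi0) => /= h; lra.
Qed.

Let delta_le0 i : delta i <= 0.
Proof.
rewrite deltaE; have := hal i.
by case: (i \in pi); case: (i \in pi0) => //= h; [| rewrite oppr_le0]; apply: ltW.
Qed.

Let delta_lt0 i : (i \in pi) != (i \in pi0) -> delta i < 0.
Proof.
rewrite deltaE; have := hal i.
by case: (i \in pi); case: (i \in pi0) => //= h _; rewrite ?oppr_lt0.
Qed.

Let gain'E s : pgain P0 P1 r0 r1 lam pi s = g s + gain P' delta s.
Proof.
rewrite /pgain -/P' -/r'.
rewrite (@gain_ext _ _ P' r' (fun i => (g i + (b i - mxv P' b i)) + delta i) s); last first.
  by move=> i; rewrite /delta; ring.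
rewrite gainD // gainD // gain_PI // addr0.
by congr (_ + _); rewrite (gain_ext _ _ (fun i => gconst i s)) gain_cst.
Qed.

Lemma other_gain_le s : pgain P0 P1 r0 r1 lam pi s <= g s.
Proof.
rewrite gain'E gerDl -(@gain_cst _ _ P' 0 s sP').
by apply: gain_mono => // i; apply: delta_le0.
Qed.

Lemma other_bias_le : gain_optimal P0 P1 r0 r1 lam pi ->
  forall s, pbias P0 P1 r0 r1 lam pi s <= b s.
Proof.
move=> gopt.
have gd s : gain P' delta s = 0.
  apply/eqP; rewrite eq_le; apply/andP; split.
    by rewrite -(@gain_cst _ _ P' 0 s sP'); apply: gain_mono => // i; apply: delta_le0.
  by have := gopt pi0 s; rewrite -/g gain'E lerDl.
have g'E s : pgain P0 P1 r0 r1 lam pi s = g s by rewrite gain'E gd addr0.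
set h := pbias P0 P1 r0 r1 lam pi.
have beq' i : g i + h i = r' i + mxv P' h i by rewrite -g'E; apply: bias_equation.
pose d i := b i - h i.
have dPd i : mxv P' d i = d i + delta i.
  rewrite /d mxvB; have := beq' i; rewrite /delta; lra.
have dle t i : mxv (P' ^+ t) d i <= d i.
  elim: t i => [|t IH] i; first by rewrite expr0 mxv1.
  rewrite mxvXSr; apply: le_trans (IH i); apply: mxv_mono; first exact: stochX.
  by move=> j; rewrite dPd gerDl delta_le0.
have [k [w [Pk bkw]]] := decomp b sP.
have k0 j : k j = 0.
  by rewrite -(gain_eq j sP Pk bkw); apply: gain_bias.
pose x i := mxv P' w i - mxv P w i.
have x0 i : (i \in pi) == (i \in pi0) -> x i = 0.
  by rewrite /x /P' /P !mxv_pol; case: (i \in pi); case: (i \in pi0) => // _;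
    rewrite subrr.
pose K := \sum_i `|x i| / (- delta i).
have xK i : `|x i| <= K * (- delta i).
  have [e|ne] := boolP ((i \in pi) == (i \in pi0)).
    by rewrite x0 // normr0 mulr_ge0 // ?oppr_ge0 ?delta_le0 // sumr_ge0 // => j _;
      rewrite divr_ge0 // oppr_ge0 delta_le0.
  have dp : 0 < - delta i by rewrite oppr_gt0 delta_lt0.
  rewrite -ler_pdivrMr // /K (bigD1 i) //= lerDl sumr_ge0 // => j _.
  by rewrite divr_ge0 // oppr_ge0 delta_le0.
have gxe s : gain P' (fun i => - delta i) s = 0.
  by rewrite -(gain_ext _ _ (fun i => mulN1r (delta i))) gainZ // gd mulr0.
have gx s : gain P' x s = 0.
  apply/eqP; rewrite eq_le; apply/andP; split.
    have := @gain_mono _ _ P' x (fun i => K * - delta i) s sP'.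
    rewrite gainZ // gxe mulr0; apply => i.
    by apply: le_trans (xK i); apply: ler_norm.
  have := @gain_mono _ _ P' (fun i => - (K * - delta i)) x s sP'.
  rewrite -(gain_ext _ _ (fun i => mulN1r (K * - delta i))) gainZ // gainZ //.
  rewrite gxe !mulr0; apply => i.
  by rewrite lerNl; apply: le_trans (xK i); rewrite -normrN ler_norm.
have gb s : gain P' b s = 0.
  rewrite (@gain_ext _ _ P' b (fun i => (w i - mxv P' w i) + x i) s).
    by rewrite gainD // gain_PI // gx addr0.
  by move=> i; rewrite bkw k0 /x; ring.
move=> s; have := gain_le sP' (fun t => dle t s).
rewrite /d gainB // gb.
by rewrite /h /pbias gain_bias // subrr subr_ge0.
Qed.

End Other.

Lemma base_BO : bias_optimal P0 P1 r0 r1 lam pi0.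
Proof.
split; first by move=> pi s; apply: other_gain_le.
by move=> pi go s; apply: other_bias_le.
Qed.

End Policy.

Section Hit.
Local Open Scope classical_set_scope.
Variables (R : realType) (n : nat).
Notation S := 'I_n.+1.
Notation vec := (S -> R).
Notation mx := 'M[R]_n.+1.
Implicit Types (A B : mx) (u v w k d : vec).

Definition nneg A := forall i j, 0 <= A i j.

Lemma mxv_mono_nn A u v i : nneg A -> (forall j, u j <= v j) ->
  mxv A u i <= mxv A v i.
Proof. by move=> A0 uv; apply: ler_sum => j _; rewrite ler_wpM2l. Qed.

Lemma mxv_ge0 A v i : nneg A -> (forall j, 0 <= v j) -> 0 <= mxv A v i.
Proof. by move=> A0 v0; apply: sumr_ge0 => j _; apply: mulr_ge0. Qed.

Lemma nnX A t : nneg A -> nneg (A ^+ t).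
Proof.
move=> A0; elim: t => [|t IH] i j; first by rewrite expr0 mxE ler0n.
by rewrite exprS -mulmxE mxE sumr_ge0 // => l _; rewrite mulr_ge0.
Qed.

Variables (P : mx) (x : S).
Hypothesis sP : stochastic P.
Let T := taboo P x.

Lemma T_nn : nneg T.
Proof. by move=> i j; rewrite mxE; case: ifP => // _; case: sP. Qed.

Lemma T1 l : mxv T (fun _ => 1) l = 1 - P l x.
Proof.
rewrite /mxv (bigD1 x) //= mxE eqxx mul0r add0r.
case: sP => _ /(_ l); rewrite (bigD1 x) //= => h.
rewrite -[X in _ = X - _]h [in RHS]addrAC subrr add0r; apply: eq_bigr => j /negPf jx.
by rewrite mxE jx mulr1.
Qed.

Definition a t i := mxv (T ^+ t) (fun _ => 1) i.

Lemma a0 i : a 0 i = 1.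
Proof. by rewrite /a expr0 mxv1. Qed.

Lemma a_ge0 t i : 0 <= a t i.
Proof. by apply: mxv_ge0 => //; apply: nnX; apply: T_nn. Qed.

Lemma aS t i : a t.+1 i = mxv T (a t) i.
Proof. by rewrite /a mxvXS. Qed.

Lemma aSr t i : a t.+1 i = mxv (T ^+ t) (mxv T (fun _ => 1)) i.
Proof. by rewrite /a mxvXSr. Qed.

Lemma a_le1 t i : a t i <= 1.
Proof.
elim: t i => [|t IH] i; first by rewrite a0.
rewrite aS; apply: le_trans (mxv_mono_nn _ T_nn IH) _.
by rewrite T1 gerBl; case: sP.
Qed.

Lemma a_decS t i : a t.+1 i <= a t i.
Proof.
rewrite aSr; apply: mxv_mono_nn; first by apply: nnX; apply: T_nn.
by move=> j; rewrite T1 gerBl; case: sP.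
Qed.

Lemma a_dec t m i : (t <= m)%N -> a m i <= a t i.
Proof.
move=> /subnK <-; elim: (m - t)%N => [|q IH]; first by rewrite add0n.
by rewrite addSn; apply: le_trans (a_decS _ _) IH.
Qed.

Lemma a_add t K i : a (t + K) i = mxv (T ^+ t) (a K) i.
Proof. by rewrite /a exprD mxvM. Qed.

Lemma hitE i t : i != x -> hit_prob P i x t.+1 = a t i - a t.+1 i.
Proof.
move=> ix; rewrite /hit_prob ix mul1r.
rewrite mxE -/T aSr /a -mxvB; apply: eq_bigr => l _.
by rewrite T1; congr (_ * _); ring.
Qed.

Lemma hit_ge0 i t : 0 <= hit_prob P i x t.
Proof.
case: t => [|t] /=; first by rewrite ler0n.
have [->|ix] := eqVneq i x; first by rewrite mul0r.
have := hitE t ix; rewrite /hit_prob ix => ->.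
by rewrite subr_ge0 a_decS.
Qed.

Lemma SN i N : i != x ->
  \sum_(t < N.+1) t%:R * hit_prob P i x t = \sum_(u < N) a u i - N%:R * a N i.
Proof.
move=> ix; elim: N => [|N IH].
  by rewrite big_ord1 big_ord0 !mul0r subr0.
rewrite big_ord_recr IH (hitE N ix) big_ord_recr /=.
rewrite -[N.+1]addn1 natrD; ring.
Qed.

End Hit.

Section Hit2.
Local Open Scope classical_set_scope.
Variables (R : realType) (n : nat).
Notation S := 'I_n.+1.
Notation vec := (S -> R).
Notation mx := 'M[R]_n.+1.

Variables (P : mx) (x : S).
Hypothesis sP : stochastic P.
Let T := taboo P x.
Notation a := (a P x).

Lemma step_lt1 j l k : 0 < P j l -> (l = x \/ a k l < 1) -> a k.+1 j < 1.
Proof.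
move=> Pjl h; have [lx|lx] := eqVneq l x.
  rewrite aS; apply: le_lt_trans (@mxv_mono_nn _ _ (taboo P x) (a k) (fun _ => 1) j (@T_nn _ _ P x sP) (fun m => @a_le1 _ _ P x sP k m)) _.
  by rewrite (@T1 _ _ P x sP) ltrBlDr ltrDl -lx.
case: h => [/eqP|h]; first by rewrite (negPf lx).
have TjS : \sum_m T j m <= 1.
  by have := @T1 _ _ P x sP j; rewrite /mxv; under eq_bigr do rewrite mulr1; move=> ->;
    rewrite gerBl; case: sP.
have H : \sum_m T j m * (a k m - 1) < 0.
  rewrite (bigD1 l) //= -[X in _ < X](addr0 0); apply: ltr_leD.
    by rewrite mxE (negPf lx) pmulr_rlt0 // subr_lt0.
  rewrite sumr_le0 // => m _; rewrite mulr_ge0_le0 //; first exact: (@T_nn _ _ P x sP).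
  by rewrite subr_le0 (@a_le1 _ _ P x sP).
rewrite aS /mxv; apply: lt_le_trans TjS.
move: H; under eq_bigr do rewrite mulrBr mulr1.
by rewrite sumrB subr_lt0.
Qed.

Lemma reach_lt1 j : accessible P j x -> j != x -> exists k, a k j < 1.
Proof.
move=> /connectP [p pth lst]; elim: p j pth lst => [|y p IH] j /= pth lst jx.
  by rewrite lst eqxx in jx.
move: pth => /andP [jy pth].
have [yx|yx] := eqVneq y x.
  by exists 1%N; apply: (step_lt1 jy); left.
have [k hk] := IH y pth lst yx.
by exists k.+1; apply: (step_lt1 jy); right.
Qed.

Hypothesis uni : unichain P.
Hypothesis rx : recurrent P x.

Lemma all_lt1 j : exists k, a k j < 1.
Proof.
have acc l : accessible P l x.
  have [y /andP [ly ry]] := exists_rec P l.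
  by apply: connect_trans ly _; case: uni => _; apply.
have [l Pl] : exists l, 0 < P j l.
  case: (boolP [exists l, 0 < P j l]) => [/existsP //|/existsPn h].
  case: sP => P0 /(_ j); rewrite big1 => [/eqP|m _]; first by rewrite eq_sym oner_eq0.
  by apply/eqP; rewrite eq_le P0 andbT leNgt h.
have [lx|lx] := eqVneq l x.
  by exists 1%N; apply: (step_lt1 Pl); left.
have [k hk] := reach_lt1 (acc l) lx.
by exists k.+1; apply: (step_lt1 Pl); right.
Qed.

Definition fK j := xchoose (all_lt1 j).
Definition K := (\sum_j fK j)%N.
Definition rho := \big[Num.max/0]_j a K j.

Lemma aK_lt1 j : a K j < 1.
Proof.
apply: le_lt_trans (xchooseP (all_lt1 j)).
by apply: (@a_dec _ _ P x sP); rewrite /K (bigD1 j) //= leq_addr.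
Qed.

Lemma K_gt0 : (0 < K)%N.
Proof. by have := aK_lt1 x; case: K => // ; rewrite a0 ltxx. Qed.

Lemma rho_ge0 : 0 <= rho.
Proof. by rewrite /rho bigmax_idl le_max lexx. Qed.

Lemma rho_lt1 : rho < 1.
Proof. by apply/bigmax_ltP; split => // j _; apply: aK_lt1. Qed.

Lemma aK_le j : a K j <= rho.
Proof. exact: le_bigmax. Qed.

Definition Bnd := K%:R / (1 - rho).

Lemma K_le_B : K%:R <= Bnd.
Proof.
rewrite /Bnd ler_pdivlMr ?subr_gt0 ?rho_lt1 //.
by rewrite ler_piMr // gerBl rho_ge0.
Qed.

Lemma sum_a_bound N i : \sum_(u < N) a u i <= Bnd.
Proof.
elim/ltn_ind: N i => N IH i.
have [NK|KN] := leqP N K.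
  apply: le_trans K_le_B; apply: le_trans (_ : N%:R <= _); last by rewrite ler_nat.
  rewrite -[N in N%:R]card_ord -sumr_const; apply: ler_sum => u _; exact: (@a_le1 _ _ P x sP).
have -> : N = (K + (N - K))%N by rewrite subnKC // ltnW.
rewrite big_split_ord /=.
have h1 : \sum_(u < K) a u i <= K%:R.
  rewrite -[X in X%:R]card_ord -sumr_const; apply: ler_sum => u _; exact: (@a_le1 _ _ P x sP).
have h2 : \sum_(u < N - K) a (K + u) i <= rho * Bnd.
  apply: le_trans (_ : \sum_(u < N - K) rho * a u i <= _).
    apply: ler_sum => u _; rewrite addnC a_add.
    apply: le_trans (@mxv_mono_nn _ _ (taboo P x ^+ u) (a K) (fun _ => rho) i (nnX u (@T_nn _ _ P x sP)) aK_le) _.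
    by rewrite -(mxv_ext _ _ (fun j => mulr1 rho)) mxvZ.
  rewrite -mulr_sumr ler_wpM2l ?rho_ge0 //; apply: IH.
  by rewrite ltn_subrL K_gt0 (leq_trans K_gt0) // ltnW.
apply: le_trans (lerD h1 h2) _.
have h : 1 - rho != 0 by rewrite subr_eq0 eq_sym (lt_eqF rho_lt1).
have e : K%:R + rho * Bnd = Bnd.
  by rewrite /Bnd; field.
by rewrite e.
Qed.

End Hit2.

Section Hit3.
Local Open Scope classical_set_scope.
Variables (R : realType) (n : nat).
Notation S := 'I_n.+1.
Notation vec := (S -> R).
Notation mx := 'M[R]_n.+1.

Variables (P : mx) (x : S).
Hypothesis sP : stochastic P.
Hypothesis uni : unichain P.
Hypothesis rx : recurrent P x.
Notation a := (a P x).
Let B := Bnd sP uni rx.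
Let sumB N i : \sum_(u < N) a u i <= B := @sum_a_bound _ _ P x sP uni rx N i.
Let B0 : 0 <= B.
Proof. exact: le_trans (ler0n _ _) (@K_le_B _ _ P x sP uni rx). Qed.

Lemma a_cvg0 i : (fun N => a N.+1 i) @ \oo --> (0 : R).
Proof.
apply: (@squeeze_cvgr _ _ _ _ (fun _ => 0) (fun N => B * harmonic N)).
- near=> N; rewrite (@a_ge0 _ _ P x sP) /=.
  rewrite /harmonic /= ler_pdivlMr ?ltr0n // mulrC; apply: le_trans (sumB N.+1 i).
  rewrite -[X in X%:R * _]card_ord -sumr_const.
  rewrite mulr_suml; apply: ler_sum => u _; rewrite mul1r.
  by apply: (@a_dec _ _ P x sP); apply: ltnW.
- exact: cvg_cst.
- have := cvgMl_tmp (a := B) (@cvg_harmonic R); rewrite mulr0; exact.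
Unshelve. all: end_near.
Qed.

Variable i : S.
Hypothesis ix : i != x.
Let Sq N := \sum_(t < N) t%:R * hit_prob P i x t.

Lemma Sq_nd : nondecreasing_seq Sq.
Proof.
apply/nondecreasing_seqP => N; rewrite /Sq big_ord_recr /= lerDl.
by rewrite mulr_ge0 // (@hit_ge0 _ _ P x sP).
Qed.

Lemma Sq_bnd N : Sq N <= B.
Proof.
case: N => [|N]; first by rewrite /Sq big_ord0.
rewrite /Sq (@SN _ _ P x sP i N ix); apply: le_trans (sumB N i).
by rewrite gerBl mulr_ge0 ?(@a_ge0 _ _ P x sP).
Qed.

Lemma Sq_cvg : cvgn Sq.
Proof.
apply: nondecreasing_is_cvgn; first exact: Sq_nd.
by exists B => _ [N _ <-]; apply: Sq_bnd.
Qed.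

Lemma E_ge N : Sq N <= exp_hit P i x.
Proof.
apply: limr_ge; first exact: Sq_cvg.
near=> m; apply: Sq_nd; near: m; exact: nbhs_infty_ge.
Unshelve. all: end_near.
Qed.

Lemma E_ge0 : 0 <= exp_hit P i x.
Proof. by apply: le_trans (E_ge 0); rewrite /Sq big_ord0. Qed.

Lemma sum_le_E M : \sum_(u < M) a u i <= exp_hit P i x.
Proof.
have H : (fun N => \sum_(u < M) a u i - M%:R * a N.+1 i) @ \oo -->
    (\sum_(u < M) a u i - M%:R * 0).
  by apply: cvgB; [exact: cvg_cst | apply: cvgMl_tmp; apply: a_cvg0].
rewrite -[X in X <= _]subr0 -[X in _ - X](mulr0 M%:R).
apply: (cvgr_to_le H); near=> N.
apply: le_trans (E_ge N.+2).
have MN : (M <= N.+1)%N by apply: leqW; near: N; exact: nbhs_infty_ge.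
rewrite /Sq (@SN _ _ P x sP i N.+1 ix).
have e1 k : \sum_(u < k) a u i - k%:R * a N.+1 i = \sum_(u < k) (a u i - a N.+1 i).
  by rewrite sumrB sumr_const card_ord mulr_natl.
rewrite e1 e1 -!(big_mkord xpredT (fun u => a u i - a N.+1 i)).
rewrite (big_cat_nat (leq0n M) MN) /= lerDl.
rewrite big_nat_cond sumr_ge0 // => u /andP [/andP [_ uN] _].
by rewrite subr_ge0 (@a_dec _ _ P x sP) // ltnW.
Unshelve. all: end_near.
Qed.

End Hit3.

Section Span.
Local Open Scope classical_set_scope.
Variables (R : realType) (n : nat).
Notation S := 'I_n.+1.
Notation vec := (S -> R).
Notation mx := 'M[R]_n.+1.

Variables (P : mx) (r : vec) (lo hi : R).
Hypothesis sP : stochastic P.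
Hypothesis uni : unichain P.
Hypothesis rlo : forall i, lo <= r i.
Hypothesis rhi : forall i, r i <= hi.

Let g := gain P r.
Let b := bias P r.

Lemma diam_ge i y : recurrent P y -> exp_hit P i y <= diam P.
Proof.
move=> ry; rewrite /diam.
apply: le_trans (le_bigmax _ _ i).
exact: (le_bigmax_cond _ _ ry).
Qed.

Lemma diam_ge0 : 0 <= diam P.
Proof. by rewrite /diam bigmax_idl le_max lexx. Qed.

Section WithX.
Local Open Scope classical_set_scope.
Variable x : S.
Hypothesis rx : recurrent P x.
Let T := taboo P x.
Let ga := g x.
Let gc i : g i = ga.
Proof. by apply: (fix_const _ _ sP uni) => l; apply: gain_fixed. Qed.
Let ga_lo : lo <= ga.
Proof.
rewrite /ga -(@gain_cst _ _ P lo x sP); apply: gain_mono => //.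
Qed.
Let ga_hi : ga <= hi.
Proof.
rewrite /ga -(@gain_cst _ _ P hi x sP); apply: gain_mono => //.
Qed.
Let c i := b i - b x.

Let c_eq i : c i = (r i - g i) + mxv T c i.
Proof.
have -> : mxv T c i = mxv P c i.
  apply: eq_bigr => j _; rewrite mxE; case: eqP => [->|//].
  by rewrite /c subrr !mulr0.
rewrite /c mxvB mxv_cst //; have := bias_equation r i sP; rewrite -/g -/b.
lra.
Qed.

Let c_iter N i : c i =
  \sum_(t < N) mxv (T ^+ t) (fun j => r j - g j) i + mxv (T ^+ N) c i.
Proof.
elim: N i => [|N IH] i; first by rewrite big_ord0 expr0 mxv1 add0r.
rewrite IH big_ord_recr /= -addrA; congr (_ + _).
by rewrite (mxv_ext _ _ c_eq) mxvD mxvXSr.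
Qed.

Let C := \sum_j `|c j|.
Let cC j : `|c j| <= C.
Proof. by rewrite /C (bigD1 j) //= lerDl sumr_ge0. Qed.

Let nnT t : nneg (T ^+ t).
Proof. exact: (nnX t (@T_nn _ _ P x sP)). Qed.

Let mxv_cstZ t c0 i : mxv (T ^+ t) (fun _ => c0) i = c0 * a P x t i.
Proof. by rewrite -(mxv_ext _ _ (fun j => mulr1 c0)) mxvZ. Qed.

Let term_hi t i : mxv (T ^+ t) (fun j => r j - g j) i <= (hi - ga) * a P x t i.
Proof.
rewrite -mxv_cstZ; apply: mxv_mono_nn => // j.
by rewrite gc lerB.
Qed.

Let term_lo t i : (lo - ga) * a P x t i <= mxv (T ^+ t) (fun j => r j - g j) i.
Proof.
rewrite -mxv_cstZ; apply: mxv_mono_nn => // j.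
by rewrite gc lerB.
Qed.

Let rem_hi N i : mxv (T ^+ N) c i <= C * a P x N i.
Proof.
rewrite -mxv_cstZ; apply: mxv_mono_nn => // j.
by apply: le_trans (cC j); apply: ler_norm.
Qed.

Let rem_lo N i : - (C * a P x N i) <= mxv (T ^+ N) c i.
Proof.
rewrite -mulNr -mxv_cstZ; apply: mxv_mono_nn => // j.
by rewrite lerNl; apply: le_trans (cC j); rewrite -normrN ler_norm.
Qed.

Let c_hi i : c i <= (hi - ga) * diam P.
Proof.
have [->|ix] := eqVneq i x.
  by rewrite /c subrr mulr_ge0 ?diam_ge0 // subr_ge0.
apply: le_trans (_ : (hi - ga) * exp_hit P i x <= _); last first.
  by rewrite ler_wpM2l ?subr_ge0 // diam_ge.
have H : (fun N => (hi - ga) * exp_hit P i x + C * a P x N.+1 i) @ \oo -->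
    (hi - ga) * exp_hit P i x.
  rewrite -[X in _ --> X]addr0 -[X in _ --> _ + X](mulr0 C); apply: cvgD.
    exact: cvg_cst.
  by apply: cvgMl_tmp; exact: (@a_cvg0 _ _ P x sP uni rx i).
apply: (cvgr_to_ge H); near=> N => /=.
rewrite (c_iter N.+1 i); apply: lerD => //.
apply: le_trans (_ : \sum_(t < N.+1) (hi - ga) * a P x t i <= _).
  by apply: ler_sum => t _; apply: term_hi.
rewrite -mulr_sumr ler_wpM2l ?subr_ge0 //.
exact: (@sum_le_E _ _ P x sP uni rx i ix).
Unshelve. all: end_near.
Qed.

Let c_lo i : (lo - ga) * diam P <= c i.
Proof.
have [->|ix] := eqVneq i x.
  by rewrite /c subrr mulr_le0_ge0 ?diam_ge0 // subr_le0.
apply: le_trans (_ : (lo - ga) * exp_hit P i x <= _).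
  by rewrite ler_wnM2l ?subr_le0 // diam_ge.
have H : (fun N => (lo - ga) * exp_hit P i x - C * a P x N.+1 i) @ \oo -->
    (lo - ga) * exp_hit P i x.
  rewrite -[X in _ --> X]subr0 -[X in _ --> _ - X](mulr0 C); apply: cvgB.
    exact: cvg_cst.
  by apply: cvgMl_tmp; exact: (@a_cvg0 _ _ P x sP uni rx i).
apply: (cvgr_to_le H); near=> N => /=.
rewrite (c_iter N.+1 i); apply: lerD => //.
apply: le_trans (_ : \sum_(t < N.+1) (lo - ga) * a P x t i <= _); last first.
  by apply: ler_sum => t _; apply: term_lo.
rewrite -mulr_sumr ler_wnM2l ?subr_le0 //.
exact: (@sum_le_E _ _ P x sP uni rx i ix).
Unshelve. all: end_near.
Qed.

Lemma bias_diff_x i j : b i - b j <= (hi - lo) * diam P.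
Proof.
have := c_hi i; have := c_lo j; rewrite /c; lra.
Qed.

End WithX.

Lemma bias_diff i j : b i - b j <= (hi - lo) * diam P.
Proof. by case: uni => [[x rx] _]; apply: (bias_diff_x rx). Qed.

Lemma sp_bias : sp b <= (hi - lo) * diam P.
Proof.
set K := (hi - lo) * diam P.
have hmax : \big[Num.max/b ord0]_s b s <= \big[Num.min/b ord0]_s b s + K.
  rewrite -lerBlDr; apply/bigmin_geP; split.
    by rewrite lerBlDr; apply/bigmax_leP; split; [|move=> s _];
      rewrite -lerBlDl; apply: bias_diff.
  move=> s _; rewrite lerBlDr; apply/bigmax_leP; split; [|move=> t _];
    rewrite -lerBlDl; apply: bias_diff.
by rewrite /sp lerBlDr addrC.
Qed.

End Span.

Section Final.
Variables (R : realType) (n : nat).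
Notation S := 'I_n.+1.
Notation vec := (S -> R).
Notation mx := 'M[R]_n.+1.

Lemma sp_ge0 (v : vec) : 0 <= sp v.
Proof.
rewrite /sp subr_ge0; apply: (@le_trans _ _ (v ord0)).
  exact: bigmin_le.
exact: le_bigmax.
Qed.

Lemma normm_ge0 (A : mx) : 0 <= normm A.
Proof. by rewrite /normm bigmax_idl le_max lexx. Qed.

Lemma normm_row (A : mx) s : \sum_j `|A s j| <= normm A.
Proof. exact: le_bigmax. Qed.

Lemma normv_ge (v : vec) s : `|v s| <= normv v.
Proof. exact: le_bigmax. Qed.

Lemma row_diff_bound (P0 P1 : mx) (v : vec) s :
  stochastic P0 -> stochastic P1 ->
  `|\sum_j (P1 s j - P0 s j) * v j| <= normm (P1 - P0) * sp v / 2.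
Proof.
move=> [_ h0] [_ h1].
set M := \big[Num.max/v ord0]_j v j; set m := \big[Num.min/v ord0]_j v j.
have vM j : v j <= M by apply: le_bigmax.
have vm j : m <= v j by apply: bigmin_le.
pose mid := (M + m) / 2.
have -> : \sum_j (P1 s j - P0 s j) * v j = \sum_j (P1 s j - P0 s j) * (v j - mid).
  under [RHS]eq_bigr do rewrite mulrBr.
  rewrite sumrB -mulr_suml sumrB h1 h0 subrr mul0r subr0 //.
apply: le_trans (ler_norm_sum _ _ _) _.
apply: le_trans (_ : \sum_j `|(P1 - P0) s j| * (sp v / 2) <= _).
  apply: ler_sum => j _; rewrite normrM !mxE; apply: ler_wpM2l => //.
  rewrite /sp -/M -/m ler_norml; have := vM j; have := vm j; rewrite /mid.
  move=> h2 h3; apply/andP; split; lra.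
rewrite -mulr_suml -mulrA ler_wpM2r ?normm_row //.
by rewrite divr_ge0 ?sp_ge0.
Qed.

End Final.

Theorem mainTheorem4 (R : realType) (n : nat) (P0 P1 : 'M[R]_n.+1)
    (r0 r1 : 'I_n.+1 -> R) :
  stochastic P0 -> stochastic P1 ->
  unichain (pol_mx P0 P1 [set: 'I_n.+1]) ->
  unichain (pol_mx P0 P1 (set0 : {set 'I_n.+1})) ->
  indexable P0 P1 r0 r1 ->
  forall (s : 'I_n.+1) (lam_s : R), whittle_index P0 P1 r0 r1 s lam_s ->
    - normv (fun i => r1 i - r0 i) - sp r1 * diam P1 * normm (P1 - P0) / 2 <= lam_s
    /\ lam_s <= normv (fun i => r1 i - r0 i) + sp r0 * diam P0 * normm (P1 - P0) / 2.
Proof.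
move=> sP0 sP1 uT u0 _ s lam_s [wl wr].
have eT : pol_mx P0 P1 [set: 'I_n.+1] = P1.
  by apply/matrixP => i j; rewrite mxE inE.
have e0 : pol_mx P0 P1 set0 = P0.
  by apply/matrixP => i j; rewrite mxE inE.
have nm0 := normm_ge0 (P1 - P0).
have d0 : 0 <= diam P0 := diam_ge0 _.
have d1 : 0 <= diam P1 := diam_ge0 _.
split.
- set L := - _ - _.
  rewrite leNgt; apply/negP => hL.
  pose lam := (L + lam_s) / 2.
  have l1 : lam_s < lam by rewrite /lam; lra.
  have l2 : lam < L by rewrite /lam; lra.
  have pos s' : 0 < act_adv P0 P1 r0 r1 lam [set: 'I_n.+1] s'.
    rewrite /act_adv.
    set b := pbias _ _ _ _ _ _.
    have spb : sp b <= sp r1 * diam P1.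
      rewrite /b /pbias eT.
      have -> : pol_rew r0 r1 lam [set: 'I_n.+1] = fun i => r1 i - lam.
        by apply: funext => i; rewrite /pol_rew inE.
      have := @sp_bias _ _ P1 (fun i => r1 i - lam)
        (\big[Num.min/r1 ord0]_j r1 j - lam) (\big[Num.max/r1 ord0]_j r1 j - lam) sP1.
      rewrite -eT; move=> /(_ uT); rewrite eT.
      have hlo i : \big[Num.min/r1 ord0]_j r1 j - lam <= r1 i - lam.
        by rewrite lerD2r bigmin_le.
      have hhi i : r1 i - lam <= \big[Num.max/r1 ord0]_j r1 j - lam.
        by rewrite lerD2r le_bigmax.
      have e : (\big[Num.max/r1 ord0]_j r1 j - lam) - (\big[Num.min/r1 ord0]_j r1 j - lam)
          = sp r1 by rewrite /sp; ring.
      by move=> /(_ hlo hhi); rewrite e.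
    have hX := row_diff_bound b s' sP0 sP1.
    have hv := normv_ge (fun i => r1 i - r0 i) s'.
    have h1 : normm (P1 - P0) * sp b / 2 <= sp r1 * diam P1 * normm (P1 - P0) / 2.
      rewrite ler_pM2r; last by rewrite invr_gt0 ltr0n.
      by rewrite [X in _ <= X]mulrC ler_wpM2l.
    move: hX hv h1 l2; rewrite /L; set X := \sum_j _.
    rewrite !ler_norml => /andP [hX1 _] /andP [hv1 _]; lra.
  have bo : bias_optimal P0 P1 r0 r1 lam [set: 'I_n.+1].
    apply: base_BO => // s'; rewrite inE; exact: pos.
  by have := wr lam l1 _ bo; rewrite ltNge ltW // pos.
- set U := _ + _.
  rewrite leNgt; apply/negP => hU.
  pose lam := (U + lam_s) / 2.
  have l1 : lam < lam_s by rewrite /lam; lra.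
  have l2 : U < lam by rewrite /lam; lra.
  have neg s' : act_adv P0 P1 r0 r1 lam set0 s' < 0.
    rewrite /act_adv.
    set b := pbias _ _ _ _ _ _.
    have spb : sp b <= sp r0 * diam P0.
      rewrite /b /pbias e0.
      have -> : pol_rew r0 r1 lam set0 = r0.
        by apply: funext => i; rewrite /pol_rew inE.
      have := @sp_bias _ _ P0 r0
        (\big[Num.min/r0 ord0]_j r0 j) (\big[Num.max/r0 ord0]_j r0 j) sP0.
      rewrite -e0; move=> /(_ u0); rewrite e0.
      have hlo i : \big[Num.min/r0 ord0]_j r0 j <= r0 i by apply: bigmin_le.
      have hhi i : r0 i <= \big[Num.max/r0 ord0]_j r0 j by apply: le_bigmax.
      by move=> /(_ hlo hhi).
    have hX := row_diff_bound b s' sP0 sP1.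
    have hv := normv_ge (fun i => r1 i - r0 i) s'.
    have h1 : normm (P1 - P0) * sp b / 2 <= sp r0 * diam P0 * normm (P1 - P0) / 2.
      rewrite ler_pM2r; last by rewrite invr_gt0 ltr0n.
      by rewrite [X in _ <= X]mulrC ler_wpM2l.
    move: hX hv h1 l2; rewrite /U; set X := \sum_j _.
    rewrite !ler_norml => /andP [_ hX1] /andP [_ hv1]; lra.
  have bo : bias_optimal P0 P1 r0 r1 lam set0.
    apply: base_BO => // s'; rewrite inE; exact: neg.
  by have := wl lam l1 _ bo; rewrite ltNge ltW // neg.
Qed.
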